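(* Let $\Omega\subseteq\mathbb{R}^n$ be open. (i) The set $\mathbb{G}(\Omega)$ of all D-continuous interval functions on $\Omega$ is order complete with respect to $\le$ (every subset has a supremum and an infimum in $\mathbb{G}(\Omega)$). (ii) Each of the following sets is Dedekind order complete with respect to $\le$: the set $\mathbb{G}_{bd}(\Omega)$ of all bounded D-continuous interval functions; the set $\mathbb{G}_{ft}(\Omega)$ of all finite D-continuous interval functions; the set $\mathbb{G}_{nf}(\Omega)$ of all nearly finite D-continuous interval functions.
   Context: $\overline{\mathbb{R}}=\mathbb{R}\cup\{\pm\infty\}$, $\mathbb{I}\overline{\mathbb{R}}$ is the set of closed intervals $[\underline a,\overline a]$ with $\underline a\le\overline a$ in $\overline{\mathbb{R}}$, $a\in\overline{\mathbb{R}}$ identified with $[a,a]$. $\mathbb{A}(X)$ is the set of functions $X\to\mathbb{I}\overline{\mathbb{R}}$. Order: $[\underline a,\overline a]\le[\underline b,\overline b]$ iff $\underline a\le\underline b$ and $\overline a\le\overline b$; $f\le g$ iff $f(x)\le g(x)$ for all $x$. $B_\delta(x)=\{y\in\Omega:\|x-y\|<\delta\}$. For dense $D\subseteq\Omega$ and $f\in\mathbb{A}(D)$: $I(D,\Omega,f)(x)=\sup_{\delta>0}\inf\{z\in f(y):y\in B_\delta(x)\cap D\}$, $S(D,\Omega,f)(x)=\inf_{\delta>0}\sup\{z\in f(y):y\in B_\delta(x)\cap D\}$, $F(D,\Omega,f)(x)=[I(D,\Omega,f)(x),S(D,\Omega,f)(x)]$. $f\in\mathbb{A}(\Omega)$ is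 D-continuous if $F(D,\Omega,f)=f$ for every dense $D\subseteq\Omega$. $f$ is bounded if there is $M\in\mathbb{R}$ with $f(x)\subseteq[-M,M]$ for all $x$; finite if $f(x)$ is a finite interval (both endpoints in $\mathbb{R}$) for all $x\in\Omega$; nearly finite if there is an open dense $D\subseteq\Omega$ with $f(x)$ finite for all $x\in D$. A poset is Dedekind order complete if every nonempty subset bounded above has a supremum in it and every nonempty subset bounded below has an infimum in it. *)

(* Defs.v *)
From HB Require Import structures.
From mathcomp Require Import all_boot all_order all_algebra.
From mathcomp Require Import all_classical all_reals.
From mathcomp Require Import ereal.
Set Implicit Arguments. Unset Strict Implicit. Unset Printing Implicit Defensive.
Import Order.TTheory GRing.Theory Num.Theory.
Local Open Scope classical_set_scope.
Local Open Scope ring_scope.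

Section Defs.
Variables (R : realType) (n : nat).

Definition pt := 'I_n -> R.
Definition edist (x y : pt) : R := Num.sqrt (\sum_(i < n) (x i - y i) ^+ 2).

Record ival := Ival { lo : \bar R ; hi : \bar R ; lohi : (lo <= hi)%E }.

Definition ival_le (a b : ival) : Prop := (lo a <= lo b)%E /\ (hi a <= hi b)%E.

Definition is_open_set (Om : set pt) : Prop :=
  forall x, Om x -> exists d : R, 0 < d /\ forall y, edist x y < d -> Om y.

Definition dom (Om : set pt) := {x : pt | Om x}.

Definition ifun (Om : set pt) := dom Om -> ival.

Definition ifun_le (Om : set pt) (f g : ifun Om) : Prop :=
  forall x, ival_le (f x) (g x).

Definition dense_in (Om : set pt) (D : set (dom Om)) : Prop :=
  forall (x : dom Om) (d : R), 0 < d ->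
    exists y : dom Om, D y /\ edist (sval x) (sval y) < d.

Definition vals (Om : set pt) (D : set (dom Om)) (f : ifun Om)
    (x : dom Om) (d : R) : set (\bar R) :=
  [set z | exists y : dom Om, [/\ D y, edist (sval x) (sval y) < d &
                                  (lo (f y) <= z <= hi (f y))%E]].

Definition Ilow (Om : set pt) (D : set (dom Om)) (f : ifun Om) (x : dom Om)
  : \bar R :=
  ereal_sup [set ereal_inf (vals D f x d) | d in [set d : R | 0 < d]].

Definition Supp (Om : set pt) (D : set (dom Om)) (f : ifun Om) (x : dom Om)
  : \bar R :=
  ereal_inf [set ereal_sup (vals D f x d) | d in [set d : R | 0 < d]].

Definition D_continuous (Om : set pt) (f : ifun Om) : Prop :=
  forall D : set (dom Om), dense_in D ->
    forall x, Ilow D f x = lo (f x) /\ Supp D f x = hi (f x).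

Definition bounded_ifun (Om : set pt) (f : ifun Om) : Prop :=
  exists M : R, forall x, ((- M)%:E <= lo (f x))%E /\ (hi (f x) <= M%:E)%E.

Definition finite_ival (a : ival) : Prop :=
  lo a \is a fin_num /\ hi a \is a fin_num.

Definition finite_ifun (Om : set pt) (f : ifun Om) : Prop :=
  forall x, finite_ival (f x).

(* D open (as a subset of R^n; D is contained in the open set Omega) *)
Definition open_in (Om : set pt) (D : set (dom Om)) : Prop :=
  forall x, D x -> exists d : R, 0 < d /\
    forall y : dom Om, edist (sval x) (sval y) < d -> D y.

Definition nearly_finite_ifun (Om : set pt) (f : ifun Om) : Prop :=
  exists D : set (dom Om), [/\ open_in D, dense_in D &
                                forall x, D x -> finite_ival (f x)].

Definition G (Om : set pt) : set (ifun Om) := [set f | D_continuous f].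
Definition G_bd (Om : set pt) : set (ifun Om) :=
  [set f | D_continuous f /\ bounded_ifun f].
Definition G_ft (Om : set pt) : set (ifun Om) :=
  [set f | D_continuous f /\ finite_ifun f].
Definition G_nf (Om : set pt) : set (ifun Om) :=
  [set f | D_continuous f /\ nearly_finite_ifun f].

Definition is_sup_in (Om : set pt) (P S : set (ifun Om)) (s : ifun Om) : Prop :=
  [/\ P s, (forall f, S f -> ifun_le f s) &
      (forall u, P u -> (forall f, S f -> ifun_le f u) -> ifun_le s u)].

Definition is_inf_in (Om : set pt) (P S : set (ifun Om)) (s : ifun Om) : Prop :=
  [/\ P s, (forall f, S f -> ifun_le s f) &
      (forall u, P u -> (forall f, S f -> ifun_le u f) -> ifun_le u s)].

Definition order_complete (Om : set pt) (P : set (ifun Om)) : Prop :=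
  forall S, S `<=` P -> (exists s, is_sup_in P S s) /\ (exists s, is_inf_in P S s).

Definition dedekind_complete (Om : set pt) (P : set (ifun Om)) : Prop :=
  forall S, S `<=` P -> S !=set0 ->
    ((exists u, P u /\ forall f, S f -> ifun_le f u) -> exists s, is_sup_in P S s) /\
    ((exists l, P l /\ forall f, S f -> ifun_le l f) -> exists s, is_inf_in P S s).

End Defs.
Arguments G {R n} Om.
Arguments G_bd {R n} Om.
Arguments G_ft {R n} Om.
Arguments G_nf {R n} Om.

(* Main.v *)
Require Import Defs.
From mathcomp Require Import all_boot all_order all_algebra all_classical all_reals.
From mathcomp Require Import ereal.
From mathcomp Require Import ring lra.
Import Order.TTheory GRing.Theory Num.Theory.
Set Implicit Arguments. Unset Strict Implicit.
Local Open Scope ring_scope.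

Section Tri.
Variables (R : realType) (n : nat).

Lemma lagrange (a b : 'I_n -> R) :
  (\sum_(i < n) a i * b i) ^+ 2 <= (\sum_(i < n) a i ^+ 2) * (\sum_(i < n) b i ^+ 2).
Proof.
have H : 0 <= \sum_(i < n) \sum_(j < n) (a i * b j - a j * b i) ^+ 2.
  by apply: sumr_ge0 => i _; apply: sumr_ge0 => j _; exact: sqr_ge0.
have E : \sum_(i < n) \sum_(j < n) (a i * b j - a j * b i) ^+ 2 =
   2 * ((\sum_(i < n) a i ^+ 2) * (\sum_(i < n) b i ^+ 2)) - 2 * (\sum_(i < n) a i * b i) ^+ 2.
  have E1 : forall i j, (a i * b j - a j * b i) ^+ 2 =
     a i ^+ 2 * b j ^+ 2 + a j ^+ 2 * b i ^+ 2 - 2 * ((a i * b i) * (a j * b j)).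
    by move=> i j; ring.
  under eq_bigr do under eq_bigr do rewrite E1.
  under eq_bigr do rewrite !big_split /= sumrN.
  rewrite !big_split /= sumrN.
  have F1 : \sum_(i < n) \sum_(j < n) a i ^+ 2 * b j ^+ 2 = (\sum_(i < n) a i ^+ 2) * (\sum_(i < n) b i ^+ 2).
    rewrite mulr_suml /=; apply: eq_bigr => i _; rewrite mulr_sumr /=.
    by apply: eq_bigr => j _.
  have F2 : \sum_(i < n) \sum_(j < n) a j ^+ 2 * b i ^+ 2 = (\sum_(i < n) a i ^+ 2) * (\sum_(i < n) b i ^+ 2).
    rewrite exchange_big /= mulr_suml /=; apply: eq_bigr => i _; rewrite mulr_sumr /=.
    by apply: eq_bigr => j _.
  have F3 : \sum_(i < n) \sum_(j < n) 2 * (a i * b i * (a j * b j)) = 2 * ((\sum_(i < n) a i * b i) * (\sum_(i < n) a i * b i)).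
    transitivity (\sum_(i < n) 2 * ((a i * b i) * \sum_(j < n) a j * b j)).
      apply: eq_bigr => i _; rewrite !mulr_sumr; apply: eq_bigr => j _; ring.
    by rewrite -mulr_sumr -mulr_suml.
  rewrite F1 F2 F3 expr2; ring.
rewrite E in H; lra.
Qed.

Lemma edist_tri (x y z : pt R n) : edist x z <= edist x y + edist y z.
Proof.
rewrite /edist.
set A := \sum_(i < n) (x i - y i) ^+ 2.
set B := \sum_(i < n) (y i - z i) ^+ 2.
have A0 : 0 <= A by apply: sumr_ge0 => i _; exact: sqr_ge0.
have B0 : 0 <= B by apply: sumr_ge0 => i _; exact: sqr_ge0.
have C := lagrange (fun i => x i - y i) (fun i => y i - z i).
rewrite -/A -/B in C.
set C0 := \sum_(i < n) (x i - y i) * (y i - z i) in C.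
have E : \sum_(i < n) (x i - z i) ^+ 2 = A + B + 2 * C0.
  rewrite /A /B /C0 mulr_sumr -!big_split /=; apply: eq_bigr => i _; ring.
rewrite E.
have HC : C0 <= Num.sqrt A * Num.sqrt B.
  rewrite -sqrtrM //.
  have := ler_norm C0; move/le_trans; apply.
  by rewrite -sqrtr_sqr ler_sqrt // ?sqr_ge0 // ?mulr_ge0.
rewrite -[leRHS]ger0_norm ?addr_ge0 ?sqrtr_ge0 // -sqrtr_sqr ler_sqrt ?sqr_ge0 //.
rewrite sqrrD !sqr_sqrtr //; lra.
Qed.

Lemma edist_xx (x : pt R n) : edist x x = 0.
Proof.
rewrite /edist (eq_bigr (fun _ => 0)); first by rewrite big1 // sqrtr0.
by move=> i _; rewrite subrr expr0n.
Qed.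
End Tri.
Import Order.TTheory.
Section Core.
Variables (R : realType) (n : nat) (Om : set (pt R n)).
Local Notation T := (dom Om).
Local Notation ed x y := (edist (sval x) (sval y)).

Lemma ball_sub (x y w : T) (d : R) : ed x y < d -> ed y w < d - ed x y -> ed x w < d.
Proof. move=> h1 h2; apply: le_lt_trans (edist_tri _ (sval y) _) _; lra. Qed.

Local Open Scope classical_set_scope.
Local Open Scope ereal_scope.

Definition LoD (D : set T) (phi : T -> \bar R) (x : T) : \bar R :=
  ereal_sup [set ereal_inf [set phi y | y in [set y | D y /\ (ed x y < d)%R]]
            | d in [set d : R | (0 < d)%R]].

Lemma between (a b : \bar R) : a < b -> exists c : R, a < c%:E < b.
Proof.
case: a => [a||]; case: b => [b||] //=; rewrite ?lte_fin.
- move=> ab; exists ((a + b) / 2)%R; rewrite !lte_fin; apply/andP; split; lra.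
- move=> _; exists (a + 1)%R; rewrite ltry andbT lte_fin; lra.
- move=> _; exists (b - 1)%R; rewrite ltNyr lte_fin; lra.
- by move=> _; exists 0%R; rewrite ltNyr ltry.
Qed.

Lemma Lo_le D phi x c : (forall d : R, (0 < d)%R ->
  exists w, [/\ D w, (ed x w < d)%R & phi w <= c]) -> LoD D phi x <= c.
Proof.
move=> H; apply: ge_ereal_sup => _ [d d0 <-].
have [w [Dw dw pw]] := H d d0.
apply: le_trans pw; apply: ereal_inf_lbound; by exists w.
Qed.

Lemma Lo_ge D phi x c : (exists2 d : R, (0 < d)%R &
  forall w, D w -> (ed x w < d)%R -> c <= phi w) -> c <= LoD D phi x.
Proof.
move=> [d d0 H]; apply: le_ereal_sup_tmp.
eexists; first by exists d.
by apply: le_ereal_inf_tmp => _ [w [Dw dw] <-]; exact: H.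
Qed.

Lemma Lo_gt D phi x c : c < LoD D phi x -> exists2 d : R, (0 < d)%R &
  forall w, D w -> (ed x w < d)%R -> c < phi w.
Proof.
move=> H; apply: contrapT => N.
have : LoD D phi x <= c.
  apply: Lo_le => d d0; apply: contrapT => N2; apply: N; exists d => // w Dw dw.
  rewrite ltNge; apply/negP => pw; apply: N2; by exists w.
by rewrite leNgt H.
Qed.

Lemma Lo_lt D phi x c : LoD D phi x < c -> forall d : R, (0 < d)%R ->
  exists w, [/\ D w, (ed x w < d)%R & phi w < c].
Proof.
move=> H d d0; apply: contrapT => N.
have : c <= LoD D phi x.
  apply: Lo_ge; exists d => // w Dw dw.
  rewrite leNgt; apply/negP => pw; apply: N; by exists w.
by rewrite leNgt H.
Qed.

Lemma Lo_mono D phi psi : (forall y, phi y <= psi y) -> forall x, LoD D phi x <= LoD D psi x.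
Proof.
move=> H x; apply: ge_ereal_sup => _ [d d0 <-]; apply: le_ereal_sup_tmp.
eexists; first by exists d.
apply: le_ereal_inf_tmp => _ [w Hw <-]; apply: le_trans (H w).
apply: ereal_inf_lbound; by exists w.
Qed.

Definition Lo := LoD setT.
Definition Up (phi : T -> \bar R) (x : T) : \bar R := - Lo (fun y => - phi y) x.

Lemma Lo_self phi x : Lo phi x <= phi x.
Proof. apply: Lo_le => d d0; exists x; split => //; by rewrite edist_xx. Qed.

Lemma Up_self phi x : phi x <= Up phi x.
Proof. rewrite /Up leeNr; exact: Lo_self. Qed.

Lemma Up_mono phi psi : (forall y, phi y <= psi y) -> forall x, Up phi x <= Up psi x.
Proof. move=> H x; rewrite /Up leeN2; apply: Lo_mono => y; by rewrite leeN2. Qed.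

Lemma Up_lt phi y c : Up phi y < c -> exists2 d : R, (0 < d)%R &
  forall w, (ed y w < d)%R -> phi w < c.
Proof.
rewrite /Up lteNl => /Lo_gt [d d0 H]; exists d => // w dw.
by have := H w I dw; rewrite lteN2.
Qed.

Lemma Up_gt phi y c : c < Up phi y -> forall d : R, (0 < d)%R ->
  exists w, (ed y w < d)%R /\ c < phi w.
Proof.
rewrite /Up lteNr => H d d0; have [w [_ dw pw]] := Lo_lt H d0.
by exists w; split => //; rewrite -lteN2.
Qed.

Lemma Up_ge phi y c : (forall d : R, (0 < d)%R -> exists w, (ed y w < d)%R /\ c <= phi w) ->
  c <= Up phi y.
Proof.
move=> H; rewrite /Up leeNr; apply: Lo_le => d d0.
have [w [dw pw]] := H d d0; exists w; split => //; by rewrite leeN2.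
Qed.

Lemma Up_le phi y c : (exists2 d : R, (0 < d)%R & forall w, (ed y w < d)%R -> phi w <= c) ->
  Up phi y <= c.
Proof.
move=> [d d0 H]; rewrite /Up leeNl; apply: Lo_ge; exists d => // w _ dw.
by rewrite leeN2; exact: H.
Qed.

Lemma LoLo phi x : Lo (Lo phi) x = Lo phi x.
Proof.
apply/le_anti/andP; split; first exact: Lo_self.
rewrite leNgt; apply/negP => /between [c /andP [h1 h2]].
have [d d0 Hd] := Lo_gt h2.
have [y [_ dy py]] := Lo_lt h1 d0.
have [w [_ dw pw]] := Lo_lt py (ltac:(lra) : (0 < d - ed x y)%R).
have := Hd w I (ball_sub dy dw); by rewrite ltNge (ltW pw).
Qed.

Lemma oppfK (phi : T -> \bar R) : (fun y => - - phi y) = phi.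
Proof. by apply: funext => y; rewrite oppeK. Qed.

Lemma UpUp phi x : Up (Up phi) x = Up phi x.
Proof. by rewrite /Up oppfK LoLo. Qed.

Lemma LoUp_mono phi psi : (forall y, phi y <= psi y) -> forall x, Lo (Up phi) x <= Lo (Up psi) x.
Proof. by move=> H; apply: Lo_mono; apply: Up_mono. Qed.

Lemma UpLo_mono phi psi : (forall y, phi y <= psi y) -> forall x, Up (Lo phi) x <= Up (Lo psi) x.
Proof. by move=> H; apply: Up_mono; apply: Lo_mono. Qed.

Lemma LoUp_idem phi x : Lo (Up (Lo (Up phi))) x = Lo (Up phi) x.
Proof.
apply/le_anti/andP; split.
  apply: Lo_mono => y; rewrite -[leRHS]UpUp; apply: Up_mono => z; exact: Lo_self.
rewrite -[leLHS]LoLo; apply: Lo_mono => y; exact: Up_self.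
Qed.

Lemma UpLo_idem phi x : Up (Lo (Up (Lo phi))) x = Up (Lo phi) x.
Proof.
apply/le_anti/andP; split.
  rewrite -[leRHS]UpUp; apply: Up_mono => y; exact: Lo_self.
apply: Up_mono => y; rewrite -[leLHS]LoLo; apply: Lo_mono => z; exact: Up_self.
Qed.

Definition Fixed (phi : T -> \bar R) := forall x, phi x = Lo (Up phi) x.

Lemma denseT : dense_in (@classical_sets.setT T).
Proof. move=> x d d0; exists x; split => //; by rewrite edist_xx. Qed.

Lemma char phi : (forall D, dense_in D -> forall x, LoD D phi x = phi x) <-> Fixed phi.
Proof.
split.
- move=> H x; apply/le_anti/andP; split.
    rewrite -{1}(H _ denseT x); apply: Lo_mono => y; exact: Up_self.
  rewrite leNgt; apply/negP => /between [c /andP [h1 h2]].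
  have [d d0 Hd] := Lo_gt h2.
  pose D := [set w : T | ~ ((ed x w < d)%R /\ phi w < c%:E)].
  have DD : dense_in D.
    move=> z e e0.
    have [Dz|nDz] := pselect (D z).
      by exists z; split => //; rewrite edist_xx.
    have [zd pz] : (ed x z < d)%R /\ phi z < c%:E by apply: contrapT.
    have := Hd z I zd => /Up_gt.
    have e1 : (0 < Num.min e (d - ed x z))%R by rewrite lt_min e0 /=; lra.
    move=> /(_ _ e1) [w [dw pw]]; exists w; split.
      by move=> [_ pw']; move: pw; rewrite ltNge (ltW pw').
    by move: dw; rewrite lt_min => /andP[].
  have E := H D DD x; rewrite -E in h1.
  have [w [Dw dw pw]] := Lo_lt h1 d0.
  by apply: Dw.
- move=> H D DD x; apply/le_anti/andP; split.
    rewrite leNgt; apply/negP => /between [c /andP [h1 h2]].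
    rewrite H in h1.
    have [d d0 Hd] := Lo_gt h2.
    have [y [_ dy py]] := Lo_lt h1 d0.
    have [e e0 He] := Up_lt py.
    have e1 : (0 < Num.min e (d - ed x y))%R by rewrite lt_min e0 /=; lra.
    have [w [Dw dw]] := DD y _ e1.
    move: dw; rewrite lt_min => /andP [dw1 dw2].
    have := Hd w Dw (ball_sub dy dw2); by rewrite ltNge (ltW (He w dw1)).
  rewrite leNgt; apply/negP => /between [c /andP [h1 h2]].
  rewrite H in h2.
  have [d d0 Hd] := Lo_gt h2.
  have [w [Dw dw pw]] := Lo_lt h1 d0.
  have : c%:E <= phi w.
    rewrite H; apply: Lo_ge; exists (d - ed x w)%R; first lra.
    move=> v _ dv; apply: ltW; apply: Hd => //; exact: ball_sub dw dv.
  by rewrite leNgt pw.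
Qed.

Lemma FixedN h : Fixed (fun y => - h y) <-> forall x, h x = Up (Lo h) x.
Proof.
rewrite /Fixed /Up oppfK; split => H x.
  by rewrite -[LHS]oppeK H.
by rewrite H oppeK.
Qed.

Lemma LoUp_Fixed phi : Fixed (Lo (Up phi)).
Proof. by move=> x; rewrite LoUp_idem. Qed.

Lemma UpLo_FixedN phi : forall x, Up (Lo phi) x = Up (Lo (Up (Lo phi))) x.
Proof. by move=> x; rewrite UpLo_idem. Qed.

Lemma Ilow_LoD D (f : ifun Om) x : Ilow D f x = LoD D (fun y => lo (f y)) x.
Proof.
rewrite /Ilow /LoD; congr ereal_sup; apply: eq_imagel => d _.
apply/le_anti/andP; split.
  apply: le_ereal_inf_tmp => _ [y [Dy dy] <-]; apply: ereal_inf_lbound.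
  by exists y; split => //; rewrite lexx lohi.
apply: le_ereal_inf_tmp => z [y [Dy dy /andP [lz _]]]; apply: le_trans lz.
by apply: ereal_inf_lbound; exists y.
Qed.

Lemma Supp_LoD D (f : ifun Om) x : Supp D f x = - LoD D (fun y => - hi (f y)) x.
Proof.
rewrite /Supp /LoD {1}/ereal_inf; congr (- ereal_sup _).
rewrite image_comp; apply: eq_imagel => d _ /=.
rewrite /ereal_inf; congr (- _).
apply/le_anti/andP; split.
  apply: ge_ereal_sup => z [y [Dy dy /andP [_ zh]]]; apply: le_ereal_sup_tmp.
  exists (hi (f y)) => //; exists (- hi (f y)); first by exists y.
  by rewrite oppeK.
apply: ge_ereal_sup => _ [_ [y [Dy dy] <-] <-]; rewrite oppeK.
apply: ereal_sup_ubound; exists y; split => //; by rewrite lexx lohi.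
Qed.

Lemma Dcont_iff (f : ifun Om) : D_continuous f <->
  Fixed (fun y => lo (f y)) /\ (forall x, hi (f x) = Up (Lo (fun y => hi (f y))) x).
Proof.
rewrite -FixedN -!char; split.
  move=> H; split => D DD x; first by rewrite -Ilow_LoD; case: (H D DD x).
  by case: (H D DD x) => _; rewrite Supp_LoD => <-; rewrite oppeK.
move=> [H1 H2] D DD x; rewrite Ilow_LoD Supp_LoD H1 // H2 // oppeK //.
Qed.
Definition supl (S : set (ifun Om)) x := ereal_sup [set lo (f x) | f in S].
Definition suph (S : set (ifun Om)) x := ereal_sup [set hi (f x) | f in S].
Definition infl (S : set (ifun Om)) x := ereal_inf [set lo (f x) | f in S].
Definition infh (S : set (ifun Om)) x := ereal_inf [set hi (f x) | f in S].

Lemma sup_ok S : S `<=` G Om -> forall x, Lo (Up (supl S)) x <= Up (Lo (suph S)) x.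
Proof.
move=> SG x; apply: le_trans (Lo_self _ _) _.
rewrite -[leRHS]UpUp; apply: Up_mono => y.
rewrite /supl; apply: ge_ereal_sup => _ [f Sf <-].
have [_ Hh] := (Dcont_iff f).1 (SG f Sf).
apply: le_trans (lohi (f y)) _; rewrite (Hh y).
apply: UpLo_mono => z; rewrite /suph; apply: ereal_sup_ubound; by exists f.
Qed.

Lemma inf_ok S : S `<=` G Om -> forall x, Lo (Up (infl S)) x <= Up (Lo (infh S)) x.
Proof.
move=> SG x; apply: le_trans (Up_self _ _).
rewrite -[leLHS]LoLo; apply: Lo_mono => y.
rewrite /infh; apply: le_ereal_inf_tmp => _ [f Sf <-].
have [Hl _] := (Dcont_iff f).1 (SG f Sf).
apply: le_trans (lohi (f y)); rewrite (Hl y).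
apply: LoUp_mono => z; rewrite /infl; apply: ereal_inf_lbound; by exists f.
Qed.

Lemma G_sup S : S `<=` G Om -> exists s, is_sup_in (G Om) S s.
Proof.
move=> SG; exists (fun x => Ival (sup_ok SG x)); split.
- change (D_continuous (fun x => Ival (sup_ok SG x))).
  apply/Dcont_iff; split; first exact: LoUp_Fixed.
  move=> x; exact: UpLo_FixedN.
- move=> f Sf x; have [Hl Hh] := (Dcont_iff f).1 (SG f Sf); split => /=.
    rewrite (Hl x); apply: LoUp_mono => y; rewrite /supl /suph; apply: ereal_sup_ubound; by exists f.
  rewrite (Hh x); apply: UpLo_mono => y; rewrite /supl /suph; apply: ereal_sup_ubound; by exists f.
- move=> u Gu ub x; have [Hl Hh] := (Dcont_iff u).1 Gu; split => /=.
    rewrite (Hl x); apply: LoUp_mono => y; rewrite /supl /suph; apply: ge_ereal_sup => _ [f Sf <-].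
    exact: (ub f Sf y).1.
  rewrite (Hh x); apply: UpLo_mono => y; rewrite /supl /suph; apply: ge_ereal_sup => _ [f Sf <-].
  exact: (ub f Sf y).2.
Qed.

Lemma G_inf S : S `<=` G Om -> exists s, is_inf_in (G Om) S s.
Proof.
move=> SG; exists (fun x => Ival (inf_ok SG x)); split.
- change (D_continuous (fun x => Ival (inf_ok SG x))).
  apply/Dcont_iff; split; first exact: LoUp_Fixed.
  move=> x; exact: UpLo_FixedN.
- move=> f Sf x; have [Hl Hh] := (Dcont_iff f).1 (SG f Sf); split => /=.
    rewrite (Hl x); apply: LoUp_mono => y; rewrite /infl /infh; apply: ereal_inf_lbound; by exists f.
  rewrite (Hh x); apply: UpLo_mono => y; rewrite /infl /infh; apply: ereal_inf_lbound; by exists f.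
- move=> u Gu lb x; have [Hl Hh] := (Dcont_iff u).1 Gu; split => /=.
    rewrite (Hl x); apply: LoUp_mono => y; rewrite /infl /infh; apply: le_ereal_inf_tmp => _ [f Sf <-].
    exact: (lb f Sf y).1.
  rewrite (Hh x); apply: UpLo_mono => y; rewrite /infl /infh; apply: le_ereal_inf_tmp => _ [f Sf <-].
  exact: (lb f Sf y).2.
Qed.

Lemma ded_convex (P : set (ifun Om)) : P `<=` G Om ->
  (forall f0 u0 s, P f0 -> P u0 -> G Om s -> ifun_le f0 s -> ifun_le s u0 -> P s) ->
  dedekind_complete P.
Proof.
move=> PG conv S SP [f0 Sf0]; have SG : S `<=` G Om by move=> f Sf; apply/PG/SP.
split.
- move=> [u0 [Pu0 ub]]; have [s [Gs ubs least]] := G_sup SG.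
  exists s; split => //.
  + apply: (conv f0 u0 s) => //; [exact: SP | exact: ubs | exact: least (PG _ Pu0) ub].
  + move=> u Pu; exact: least (PG _ Pu).
- move=> [l0 [Pl0 lb]]; have [s [Gs lbs great]] := G_inf SG.
  exists s; split => //.
  + apply: (conv l0 f0 s) => //; [exact: SP | exact: great (PG _ Pl0) lb | exact: lbs].
  + move=> u Pu; exact: great (PG _ Pu).
Qed.

Lemma fin_between (a x b : \bar R) : a \is a fin_num -> b \is a fin_num ->
  a <= x -> x <= b -> x \is a fin_num.
Proof.
move: a b x => [a||] [b||] [x||] //=.
Qed.

Lemma conv_bd : forall f0 u0 s, G_bd Om f0 -> G_bd Om u0 -> G Om s ->
  ifun_le f0 s -> ifun_le s u0 -> G_bd Om s.
Proof.
move=> f0 u0 s [_ [M0 H0]] [_ [M1 H1]] Gs le1 le2; split => //.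
exists (Num.max M0 M1) => x; split.
- apply: le_trans (le1 x).1; apply: le_trans (H0 x).1.
  by rewrite lee_fin lerN2 le_max lexx.
- apply: le_trans (le2 x).2 _; apply: le_trans (H1 x).2 _.
  by rewrite lee_fin le_max lexx orbT.
Qed.

Lemma conv_ft : forall f0 u0 s, G_ft Om f0 -> G_ft Om u0 -> G Om s ->
  ifun_le f0 s -> ifun_le s u0 -> G_ft Om s.
Proof.
move=> f0 u0 s [_ F1] [_ F2] Gs le1 le2; split => // x.
have [a1 a2] := F1 x; have [b1 b2] := F2 x.
by split; [exact: fin_between a1 b1 (le1 x).1 (le2 x).1
          | exact: fin_between a2 b2 (le1 x).2 (le2 x).2].
Qed.

Lemma conv_nf : forall f0 u0 s, G_nf Om f0 -> G_nf Om u0 -> G Om s ->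
  ifun_le f0 s -> ifun_le s u0 -> G_nf Om s.
Proof.
move=> f0 u0 s [_ [D1 [O1 De1 F1]]] [_ [D2 [O2 De2 F2]]] Gs le1 le2; split => //.
exists (D1 `&` D2); split.
- move=> x [D1x D2x]; have [r1 [r10 H1]] := O1 x D1x; have [r2 [r20 H2]] := O2 x D2x.
  exists (Num.min r1 r2); split; first by rewrite lt_min r10 r20.
  by move=> y; rewrite lt_min => /andP [h1 h2]; split; [exact: H1 | exact: H2].
- move=> x d d0; have [y1 [D1y1 dy1]] := De1 x d d0.
  have [r [r0 Hr]] := O1 y1 D1y1.
  have e1 : (0 < Num.min r (d - ed x y1))%R by rewrite lt_min r0 /=; lra.
  have [y2 [D2y2 dy2]] := De2 y1 _ e1.
  move: dy2; rewrite lt_min => /andP [h1 h2].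
  exists y2; split; first by split => //; exact: Hr.
  exact: ball_sub dy1 h2.
- move=> x [D1x D2x]; have [a1 a2] := F1 x D1x; have [b1 b2] := F2 x D2x.
  by split; [exact: fin_between a1 b1 (le1 x).1 (le2 x).1
            | exact: fin_between a2 b2 (le1 x).2 (le2 x).2].
Qed.

Lemma main_thm : order_complete (G Om) /\
  [/\ dedekind_complete (G_bd Om), dedekind_complete (G_ft Om) &
      dedekind_complete (G_nf Om)].
Proof.
split; first by move=> S SG; split; [exact: G_sup | exact: G_inf].
split; apply: ded_convex.
- by move=> f [].
- exact: conv_bd.
- by move=> f [].
- exact: conv_ft.
- by move=> f [].
- exact: conv_nf.
Qed.
End Core.

Theorem theorem15 (R : realType) (n : nat) (Om : set (pt R n)) :
  is_open_set Om ->
  order_complete (G Om) /\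
  [/\ dedekind_complete (G_bd Om), dedekind_complete (G_ft Om) &
      dedekind_complete (G_nf Om)].
Proof. move=> _; exact: main_thm. Qed.
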